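(* Let $n\ge p$ and $\delta>0$. There exists a constant $K_{n,p,\delta}>0$, depending only on $n,p,\delta$, such that for every $p\times p$ diagonal matrix $D=\mathrm{diag}(d_1,\dots,d_p)$ with positive diagonal entries, $${}_0F_1\!\left(\tfrac{n}{2},\tfrac{D^2}{4}\right)>K_{n,p,\delta}\;\mathrm{etr}\big((1-\delta)D\big).$$
   Context: $\mathcal V_{n,p}=\{X\in\mathbb R^{n\times p}: X^TX=I_p\}$ with normalized Haar probability measure $[dX]$; $\mathrm{etr}(A)=\exp(\mathrm{tr}A)$. For diagonal $D$ with diagonal $\boldsymbol d$, ${}_0F_1\!\left(\tfrac n2,\tfrac{D^2}{4}\right)=\int_{\mathcal V_{n,p}}\exp\big(\sum_{j=1}^p d_jX_{jj}\big)[dX]$ (equivalently $\int\mathrm{etr}(VDM^TX)[dX]$ for any $M\in\mathcal V_{n,p}$, $V\in O(p)$). *)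

(* Defs.v *)
From HB Require Import structures.
From mathcomp Require Import all_boot all_order all_algebra.
From mathcomp Require Import all_classical all_reals all_analysis.
Set Implicit Arguments. Unset Strict Implicit. Unset Printing Implicit Defensive.
Import Order.TTheory GRing.Theory Num.Theory.
Import numFieldNormedType.Exports.
Local Open Scope ring_scope.
Local Open Scope classical_set_scope.

Definition stiefel (R : realType) (n p : nat) : set 'M[R]_(n, p) :=
  [set X | X^T *m X = 1%:M].

Definition orthogonal (R : realType) (n : nat) : set 'M[R]_n :=
  [set Q | Q^T *m Q = 1%:M].

(* [is_haar_stiefel P X] : the random matrix X (on the probability space P)
   has the normalized Haar law on V_{n,p}, i.e. X takes values in V_{n,p},
   its entries are measurable, and its law is invariant under left
   multiplication by orthogonal matrices (tested against all bounded
   continuous functions, which determine a Borel probability law on the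
   compact set V_{n,p}).  By uniqueness of the O(n)-invariant probability
   measure on V_{n,p}, this characterizes the Haar measure [dX]. *)
Definition is_haar_stiefel (R : realType) (n p : nat)
    (d : measure_display) (T : measurableType d) (P : probability T R)
    (X : T -> 'M[R]_(n, p)) : Prop :=
  [/\ (forall t, stiefel (X t)),
      (forall i j, measurable_fun setT (fun t => X t i j)) &
      (forall Q : 'M[R]_n, orthogonal Q ->
        forall g : 'M[R]_(n, p) -> R, continuous g ->
          (exists M : R, forall Y, `|g Y| <= M) ->
          (\int[P]_t (g (Q *m X t))%:E = \int[P]_t (g (X t))%:E)%E)].

(* 0F1(n/2, D^2/4) = \int_{V_{n,p}} exp(sum_j d_j X_jj) [dX], D = diag(d) *)
Definition hyp0F1_stiefel (R : realType) (n p : nat) (hnp : (p <= n)%N)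
    (d : measure_display) (T : measurableType d) (P : probability T R)
    (X : T -> 'M[R]_(n, p)) (dv : 'rV[R]_p) : \bar R :=
  (\int[P]_t (expR (\sum_(j < p) dv 0 j * X t (widen_ord hnp j) j))%:E)%E.

(* Main.v *)
Require Import Defs.
From HB Require Import structures.
From mathcomp Require Import all_boot all_order all_algebra.
From mathcomp Require Import all_classical all_reals all_analysis.
From mathcomp Require Import ring lra.
From mathcomp Require Import finmap.
Import Order.TTheory GRing.Theory Num.Theory.
Import numFieldNormedType.Exports.
Local Open Scope ring_scope.

Lemma sum_delta (R : realType) (n : nat) (a : 'I_n) (F : 'I_n -> R) :
  \sum_(l < n) (l == a)%:R * F l = F a.
Proof.
rewrite (bigD1 a) //= eqxx mul1r big1 ?addr0 // => l /negbTE ->; by rewrite mul0r.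
Qed.

Lemma orth_col (R : realType) n p (Z : 'M[R]_(n, p)) a b :
  Z^T *m Z = 1%:M -> \sum_l Z l a * Z l b = (a == b)%:R.
Proof.
move=> /matrixP /(_ a b); rewrite !mxE => <-.
by apply: eq_bigr => l _; rewrite mxE.
Qed.

Lemma hh_step (R : realType) n p (hnp : (p <= n)%N) (Z : 'M[R]_(n, p)) (k : 'I_p) :
  Z^T *m Z = 1%:M ->
  (forall (i : 'I_n) (j : 'I_p), (j < k)%N -> Z i j = ((i : nat) == j)%:R) ->
  exists H : 'M[R]_n, H^T *m H = 1%:M /\
    forall (i : 'I_n) (j : 'I_p), (j <= k)%N -> (H *m Z) i j = ((i : nat) == j)%:R.
Proof.
move=> ZZ Zk.
pose kk := widen_ord hnp k.
pose w i := Z i k - (i == kk)%:R.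
pose c := \sum_i w i * w i.
have S_lt : forall j : 'I_p, (j < k)%N -> \sum_l w l * Z l j = 0.
  move=> j jk.
  have -> : \sum_l w l * Z l j = \sum_l Z l k * Z l j - \sum_l (l == kk)%:R * Z l j.
    rewrite -sumrB; apply: eq_bigr => l _; rewrite /w; ring.
  rewrite orth_col // sum_delta Zk //.
  have -> : (k == j) = false by apply/negbTE; rewrite neq_ltn jk orbT.
  have -> : ((kk : nat) == j) = false.
    by apply/negbTE; rewrite /= neq_ltn jk orbT.
  by rewrite subrr.
have S_k : \sum_l w l * Z l k = 1 - Z kk k.
  have -> : \sum_l w l * Z l k = \sum_l Z l k * Z l k - \sum_l (l == kk)%:R * Z l k.
    rewrite -sumrB; apply: eq_bigr => l _; rewrite /w; ring.
  by rewrite orth_col // sum_delta eqxx.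
have cE : c = 2 * (1 - Z kk k).
  have -> : c = \sum_l w l * Z l k - \sum_l (l == kk)%:R * w l.
    rewrite -sumrB; apply: eq_bigr => l _; rewrite /w; ring.
  rewrite S_k sum_delta /w eqxx /=; ring.
have [c0|cn0] := eqVneq c 0.
  have w0 : forall i, w i = 0.
    move=> i; have /eqP := c0; rewrite psumr_eq0; last by move=> l _; by rewrite -expr2 sqr_ge0.
    by move=> /allP /(_ i (mem_index_enum _)) /implyP /(_ isT); rewrite mulf_eq0 orbb => /eqP.
  exists 1%:M; split; first by rewrite trmx1 mul1mx.
  move=> i j; rewrite mul1mx leq_eqVlt => /orP [/eqP jk|]; last exact: Zk.
  have -> : j = k by apply: val_inj.
  by have /eqP := w0 i; rewrite subr_eq0 => /eqP ->.
pose al := 2 / c.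
pose H := \matrix_(i, l) ((i == l)%:R - al * (w i * w l)) : 'M[R]_n.
exists H; split.
  apply/matrixP => a b; rewrite !mxE.
  have -> : \sum_i H^T a i * H i b =
     \sum_i (i == a)%:R * (i == b)%:R - \sum_i (i == a)%:R * (al * w i * w b)
     - \sum_i (i == b)%:R * (al * w i * w a) + al * al * w a * w b * c.
    rewrite /c mulr_sumr -!sumrB -big_split /=; apply: eq_bigr => i _.
    rewrite !mxE; ring.
  rewrite !sum_delta.
  have -> : al * al * w a * w b * c = 2 * al * w a * w b.
    rewrite /al; field; exact: cn0.
  rewrite eq_sym; ring.
move=> i j; rewrite leq_eqVlt => /orP [/eqP jk|jk].
  have -> : j = k by apply: val_inj.
  rewrite mxE.
  have -> : \sum_l H i l * Z l k = \sum_l (l == i)%:R * Z l k - al * w i * \sum_l w l * Z l k.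
    rewrite mulr_sumr -sumrB; apply: eq_bigr => l _; rewrite mxE eq_sym; ring.
  rewrite sum_delta S_k.
  have -> : al * w i * (1 - Z kk k) = w i.
    rewrite /al; have : c != 0 by []. rewrite cE => h2. field.
    by move: h2; rewrite mulf_eq0 negb_or => /andP [].
  rewrite /w; ring.
rewrite mxE.
have -> : \sum_l H i l * Z l j = \sum_l (l == i)%:R * Z l j - al * w i * \sum_l w l * Z l j.
  rewrite mulr_sumr -sumrB; apply: eq_bigr => l _; rewrite mxE eq_sym; ring.
by rewrite sum_delta S_lt // mulr0 subr0 Zk.
Qed.

Lemma hh_complete (R : realType) n p (hnp : (p <= n)%N) (Y : 'M[R]_(n, p)) :
  Y^T *m Y = 1%:M -> forall m, (m <= p)%N ->
  exists Q : 'M[R]_n, Q^T *m Q = 1%:M /\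
    forall (i : 'I_n) (j : 'I_p), (j < m)%N -> (Q *m Y) i j = ((i : nat) == j)%:R.
Proof.
move=> YY; elim=> [|m IH] mp.
  by exists 1%:M; split; [rewrite trmx1 mul1mx | ].
have [Q [QQ HQ]] := IH (ltnW mp).
have ZZ : (Q *m Y)^T *m (Q *m Y) = 1%:M.
  by rewrite trmx_mul mulmxA -(mulmxA Y^T) QQ mulmx1.
have [H [HH HZ]] := @hh_step R n p hnp _ (Ordinal mp) ZZ HQ.
exists (H *m Q); split.
  by rewrite trmx_mul mulmxA -(mulmxA Q^T) HH mulmx1.
by move=> i j jm; rewrite -mulmxA HZ.
Qed.

Definition clip {R : realType} (x : R) : R := Num.min 1 (Num.max 0 x).

Lemma clip_cases {R : realType} (x : R) :
  (x <= 0 /\ clip x = 0) \/ (0 <= x <= 1 /\ clip x = x) \/ (1 <= x /\ clip x = 1).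
Proof.
rewrite /clip; case: (lerP x 0) => hx.
  by left; split => //; case: (lerP 0 1) => //; lra.
case: (lerP x 1) => h1.
  by right; left; split; [apply/andP; split; lra | ].
by right; right; split; lra.
Qed.

Lemma clip_cont (R : realType) : continuous (@clip R).
Proof.
move=> x; apply: (@continuous_min R R (cst 1) (fun y => Num.max 0 y)).
  exact: cst_continuous.
apply: (@continuous_max R R (cst 0) id); first exact: cst_continuous.
exact: cvg_id.
Qed.

Lemma cont_sum (T : topologicalType) (R : realType) (I : Type) (s : seq I)
    (F : I -> T -> R) :
  (forall i, continuous (F i)) -> continuous (fun x => \sum_(i <- s) F i x).
Proof.
move=> HF; elim: s => [|a s IH].
  under eq_fun do rewrite big_nil; exact: cst_continuous.
under eq_fun do rewrite big_cons.
by move=> x; apply: cvgD; [exact: HF | exact: IH].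
Qed.

Definition sd {R : realType} {n p : nat} (hnp : (p <= n)%N) (Y : 'M[R]_(n, p)) : R :=
  \sum_(j < p) Y (widen_ord hnp j) j.

Definition gf {R : realType} {n p : nat} (hnp : (p <= n)%N) (de : R) (Y : 'M[R]_(n, p)) : R :=
  clip ((sd hnp Y - (p%:R - de)) / de).

Lemma sd_cont (R : realType) n p (hnp : (p <= n)%N) : continuous (@sd R n p hnp).
Proof.
have := (@cont_sum 'M[R]_(n, p) R _ (index_enum 'I_p)
   (fun j Y => Y (widen_ord hnp j) j) (fun j => @coord_continuous R n p (widen_ord hnp j) j)).
move=> h; exact h.
Qed.

Lemma gf_cont (R : realType) n p (hnp : (p <= n)%N) (de : R) : continuous (@gf R n p hnp de).
Proof.
move=> Y.
apply: (@continuous_comp _ _ _ (@sd R n p hnp) (fun y => clip ((y - (p%:R - de)) / de))).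
  exact: sd_cont.
apply: (@continuous_comp _ _ _ (fun y => (y - (p%:R - de)) / de) clip); last exact: clip_cont.
apply: cvgM; last exact: cvg_cst.
apply: cvgB; [exact: cvg_id | exact: cvg_cst].
Qed.

Lemma gf_ge0 {R : realType} {n p : nat} (hnp : (p <= n)%N) (de : R) Y : 0 <= gf hnp de Y.
Proof. rewrite /gf; case: (clip_cases ((sd hnp Y - (p%:R - de)) / de)); lra. Qed.

Lemma gf_le1 {R : realType} {n p : nat} (hnp : (p <= n)%N) (de : R) Y : gf hnp de Y <= 1.
Proof. rewrite /gf; case: (clip_cases ((sd hnp Y - (p%:R - de)) / de)); lra. Qed.

Lemma entry_bound {R : realType} {n p : nat} (Y : 'M[R]_(n, p)) i j :
  Y^T *m Y = 1%:M -> Y i j <= 1.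
Proof.
move=> YY; have := @orth_col R n p Y j j YY; rewrite eqxx (bigD1 i) //= => h.
have : 0 <= \sum_(l | l != i) Y l j * Y l j.
  by apply: sumr_ge0 => l _; rewrite -expr2 sqr_ge0.
nra.
Qed.

Lemma key_bound (R : realType) n p (hnp : (p <= n)%N) (de : R) (hde : 0 < de)
    (Y : 'M[R]_(n, p)) (dv : 'rV[R]_p) :
  Y^T *m Y = 1%:M -> (forall j, 0 < dv 0 j) ->
  expR (\sum_(j < p) (1 - de) * dv 0 j) * gf hnp de Y <=
  expR (\sum_(j < p) dv 0 j * Y (widen_ord hnp j) j).
Proof.
move=> YY dvp.
have e0 := expR_gt0 (\sum_(j < p) (1 - de) * dv 0 j).
have g1 := gf_le1 hnp de Y.
rewrite /gf in g1 *.
set z := (sd hnp Y - (p%:R - de)) / de.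
case: (clip_cases z) => [[_ ->]|hz].
  by rewrite mulr0 ltW // expR_gt0.
have z0 : 0 <= z by case: hz => [[/andP [] ]|[]]; lra.
have sdge : p%:R - de <= sd hnp Y.
  move: z0; rewrite /z pmulr_lge0 ?invr_gt0 //; lra.
have Yge : forall j : 'I_p, 1 - de <= Y (widen_ord hnp j) j.
  move=> j.
  have hs : \sum_(k < p) (1 - Y (widen_ord hnp k) k) = p%:R - sd hnp Y.
    by rewrite sumrB sumr_const card_ord.
  have : 1 - Y (widen_ord hnp j) j <= \sum_(k < p) (1 - Y (widen_ord hnp k) k).
    rewrite (bigD1 j) //= lerDl; apply: sumr_ge0 => k _.
    by rewrite subr_ge0 (entry_bound _ _ _ YY).
  lra.
apply: (@le_trans _ _ (expR (\sum_(j < p) (1 - de) * dv 0 j))).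
  nra.
rewrite ler_expR; apply: ler_sum => j _.
have := dvp j; have := Yge j; nra.
Qed.

Local Open Scope classical_set_scope.

Lemma entry_abs {R : realType} {n p : nat} (Y : 'M[R]_(n, p)) i j :
  Y^T *m Y = 1%:M -> `|Y i j| <= 1.
Proof.
move=> YY; rewrite ler_norml (entry_bound _ _ _ YY) andbT.
have tN : (- Y)^T = - Y^T by apply/matrixP => a b; rewrite !mxE.
have YN : (- Y)^T *m (- Y) = 1%:M by rewrite tN mulNmx mulmxN opprK.
have := entry_bound _ i j YN; rewrite mxE; lra.
Qed.

Lemma vec_mxE' {R : realType} {n p : nat} (v : 'rV[R]_(n * p)) a b :
  vec_mx v a b = v 0 (mxvec_index a b).
Proof. by rewrite /vec_mx mxE. Qed.

Lemma stiefel_compact (R : realType) (n p : nat) :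
  compact [set v : 'rV[R]_(n * p) | (vec_mx v)^T *m vec_mx v = 1%:M].
Proof.
apply: bounded_closed_compact.
  exists 1; split; first exact: num_real.
  move=> M M1 v /= Sv.
  rewrite [X in X <= _]/Num.Def.normr /= mx_normrE; apply/bigmax_leP; split.
    by rewrite /=; lra.
  move=> [i k] _ /=; rewrite ord1.
  case/mxvec_indexP: k => a b.
  rewrite -vec_mxE'; have := entry_abs _ a b Sv; lra.
have -> : [set v : 'rV[R]_(n * p) | (vec_mx v)^T *m vec_mx v = 1%:M] =
  \bigcap_(ij in [set: 'I_p * 'I_p])
     ((fun v : 'rV[R]_(n * p) => \sum_l v 0 (mxvec_index l ij.1) * v 0 (mxvec_index l ij.2))
        @^-1` [set x | x = (ij.1 == ij.2)%:R]).
  apply/seteqP; split => v /=.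
    move=> Sv [a b] _ /=; rewrite -(@orth_col R n p _ a b Sv).
    by apply: eq_bigr => l _; rewrite !vec_mxE'.
  move=> H; apply/matrixP => a b; rewrite !mxE.
  have /= <- := H (a, b) I.
  by apply: eq_bigr => l _; rewrite !mxE.
apply: closed_bigI => [[a b]] _; apply: preimage_closed; last exact: closed_eq.
move=> v _.
have := @cont_sum _ R _ (index_enum 'I_n)
   (fun l (v : 'rV[R]_(n * p)) => v 0 (mxvec_index l a) * v 0 (mxvec_index l b)).
apply => // l w.
have h1 := @coord_continuous R 1 (n * p) 0 (mxvec_index l a) w.
have h2 := @coord_continuous R 1 (n * p) 0 (mxvec_index l b) w.
have := continuousM h1 h2; exact.
Qed.

Lemma sd_vec_cont (R : realType) (n p : nat) (hnp : (p <= n)%N) (Q : 'M[R]_n) :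
  continuous (fun v : 'rV[R]_(n * p) => sd hnp (Q *m vec_mx v)).
Proof.
have -> : (fun v : 'rV[R]_(n * p) => sd hnp (Q *m vec_mx v)) =
  (fun v => \sum_(j <- index_enum 'I_p) \sum_(l <- index_enum 'I_n)
      Q (widen_ord hnp j) l * v 0 (mxvec_index l j)).
  apply/funext => v; rewrite /sd; apply: eq_bigr => j _; rewrite mxE.
  by apply: eq_bigr => l _; rewrite vec_mxE'.
apply: cont_sum => j; apply: cont_sum => l w.
have h1 := @cst_continuous 'rV[R]_(n * p) R (Q (widen_ord hnp j) l) w.
have h2 := @coord_continuous R 1 (n * p) 0 (mxvec_index l j) w.
have := continuousM h1 h2; exact.
Qed.

Lemma finite_cover (R : realType) (n p : nat) (hnp : (p <= n)%N) (de : R) (hde : 0 < de) :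
  exists D' : {fset 'M[R]_n}, (forall Q, Q \in D' -> Q^T *m Q = 1%:M) /\
    forall Y : 'M[R]_(n, p), Y^T *m Y = 1%:M ->
      exists2 Q, Q \in D' & 1/2 <= gf hnp de (Q *m Y).
Proof.
have cc := stiefel_compact R n p; rewrite compact_cover in cc.
pose F := (fun Q : 'M[R]_n =>
   [set v : 'rV[R]_(n * p) | p%:R - de / 2 < sd hnp (Q *m vec_mx v)]).
have hop : forall Q, [set Q : 'M[R]_n | Q^T *m Q = 1%:M] Q -> open (F Q).
  move=> Q _.
  apply: (@open_comp _ _ (fun v : 'rV[R]_(n * p) => sd hnp (Q *m vec_mx v))
           [set x | p%:R - de / 2 < x]); last exact: open_gt.
  move=> v _; exact: sd_vec_cont.
have hcov : [set v : 'rV[R]_(n * p) | (vec_mx v)^T *m vec_mx v = 1%:M] `<=`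
    cover [set Q : 'M[R]_n | Q^T *m Q = 1%:M] F.
  move=> v Sv.
  have [Q [QQ HQ]] := @hh_complete R n p hnp _ Sv p (leqnn p).
  exists Q => //=; rewrite /F /=.
  have -> : sd hnp (Q *m vec_mx v) = p%:R.
    rewrite /sd (eq_bigr (fun=> 1)); first by rewrite sumr_const card_ord.
    by move=> j _; rewrite HQ //= eqxx.
  lra.
have [D' sD' cov] := cc _ _ _ hop hcov.
exists D'; split.
  by move=> Q /sD'; rewrite in_setE.
move=> Y YY.
have Sv : (vec_mx (mxvec Y))^T *m vec_mx (mxvec Y) = 1%:M by rewrite mxvecK.
have [Q QD hQ] := cov _ Sv. move: hQ; rewrite /F /= mxvecK => hQ.
exists Q => //.
rewrite /gf; set z := (_ / de).
have zE : z * de = sd hnp (Q *m Y) - (p%:R - de) by rewrite /z divfK // gt_eqF.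
have z2 : 1/2 <= z by nra.
case: (clip_cases z); lra.
Qed.

Local Close Scope classical_set_scope.

Lemma sum_const_seq {R : realType} (I : Type) (s : seq I) (c : R) :
  \sum_(i <- s) c = c *+ size s.
Proof. by elim: s => [|a s IH]; rewrite ?big_nil // big_cons IH mulrS. Qed.

Lemma le_sum_seq {R : realType} (I : eqType) (s : seq I) (F : I -> R) x :
  (forall y, 0 <= F y) -> x \in s -> F x <= \sum_(y <- s) F y.
Proof.
move=> F0; elim: s => [//|a s IH]; rewrite inE big_cons => /orP [/eqP ->|xs].
  by rewrite lerDl; apply: sumr_ge0.
by apply: (le_trans (IH xs)); rewrite lerDr.
Qed.

Lemma aclip_cont (R : realType) (c de : R) : continuous (fun y : R => clip ((y - c) / de)).
Proof.
move=> y.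
apply: (@continuous_comp _ _ _ (fun y => (y - c) / de) clip); last exact: clip_cont.
apply: cvgM; last exact: cvg_cst.
apply: cvgB; [exact: cvg_id | exact: cvg_cst].
Qed.

Theorem lemma3 (R : realType) (n p : nat) (hnp : (p <= n)%N)
    (delta : R) (hdelta : 0 < delta) :
  exists K : R, 0 < K /\
    forall (d : measure_display) (T : measurableType d) (P : probability T R)
      (X : T -> 'M[R]_(n, p)),
      is_haar_stiefel P X ->
      forall dv : 'rV[R]_p, (forall j, 0 < dv 0 j) ->
        ((K * expR (\tr ((1 - delta) *: diag_mx dv)))%:E
           < hyp0F1_stiefel hnp P X dv)%E.
Proof.
have EF : forall x : R, 0 <= x -> (0 <= x%:E)%E by move=> x; rewrite lee_fin.
have [D' [DO Dcov]] := @finite_cover R n p hnp delta hdelta.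
pose N := size D'.
pose M : R := (N.+1)%:R.
have M0 : 0 < M by rewrite ltr0n.
exists (1 / (4 * M)); split; first by rewrite divr_gt0 // mulr_gt0.
move=> d T P X [HS Hm Hinv] dv dvp.
pose a := \sum_(j < p) (1 - delta) * dv 0 j.
have trE : \tr ((1 - delta) *: diag_mx dv) = a.
  by rewrite /mxtrace; apply: eq_bigr => j _; rewrite !mxE eqxx mulr1n.
rewrite trE.
have mg : forall Q : 'M[R]_n, measurable_fun setT (fun t => gf hnp delta (Q *m X t)).
  move=> Q.
  have -> : (fun t => gf hnp delta (Q *m X t)) =
    (fun y => clip ((y - (p%:R - delta)) / delta)) \o
    (fun t => \sum_(j <- index_enum 'I_p) \sum_(l <- index_enum 'I_n)
        Q (widen_ord hnp j) l * X t l j).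
    apply/funext => t; rewrite /gf /sd /=; congr (clip ((_ - _) / _)).
    by apply: eq_bigr => j _; rewrite mxE.
  apply: measurableT_comp; first by apply: measurable_realfun.continuous_measurable_fun; exact: aclip_cont.
  apply: measurable_sum => j; apply: measurable_sum => l.
  by apply: measurable_realfun.measurable_funM => //; exact: measurable_cst.
have mg1 : measurable_fun setT (fun t => gf hnp delta (X t)).
  by have := mg 1%:M; under eq_fun do rewrite mul1mx.
have mexp : measurable_fun setT
    (fun t => expR (\sum_(j < p) dv 0 j * X t (widen_ord hnp j) j)).
  apply: measurableT_comp; first exact: measurable_realfun.measurable_expR.
  apply: measurable_sum => j.
  by apply: measurable_realfun.measurable_funM => //; exact: measurable_cst.
pose Ig := (\int[P]_t (gf hnp delta (X t))%:E)%E.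
have Ig0 : (0 <= Ig)%E.
  apply: integral_ge0 => t _. have := EF _ (gf_ge0 hnp delta (X t)). exact.
have step1 : ((expR a)%:E * Ig <= hyp0F1_stiefel hnp P X dv)%E.
  rewrite /Ig -ge0_integralZl //.
  - apply: ge0_le_integral => //.
    + move=> t _; rewrite -EFinM.
      have := EF _ (mulr_ge0 (ltW (expR_gt0 a)) (gf_ge0 hnp delta (X t))); exact.
    + have h : measurable_fun setT (fun t => expR a * gf hnp delta (X t)).
        by apply: measurable_realfun.measurable_funM => //; exact: measurable_cst.
      move/measurable_realfun.measurable_EFinP: h => h.
      under eq_fun do rewrite -EFinM.
      exact: h.
    + by move/measurable_realfun.measurable_EFinP: mexp.
    + move=> t _; rewrite -EFinM.
      have := @key_bound R n p hnp delta hdelta (X t) dv (HS t) dvp; exact.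
  - by move/measurable_realfun.measurable_EFinP: mg1.
  - by move=> t _; have := EF _ (gf_ge0 hnp delta (X t)); exact.
have step2 : ((1/2)%:E <= \sum_(Q <- D') Ig)%E.
  have <- : (\int[P]_t (\sum_(Q <- D') (gf hnp delta (Q *m X t))%:E) =
              \sum_(Q <- D') Ig)%E.
    rewrite ge0_integral_sum //.
    - apply: eq_big_seq => Q QD; rewrite /Ig; apply: Hinv.
      + exact: DO.
      + exact: gf_cont.
      + by exists 1 => Y; rewrite ger0_norm ?gf_ge0 ?gf_le1.
    - by move=> Q; move/measurable_realfun.measurable_EFinP: (mg Q).
    - by move=> Q t _; have := EF _ (gf_ge0 hnp delta (Q *m X t)); exact.
  apply: (@le_trans _ _ (\int[P]_t (cst (1/2 : R)%:E t))%E).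
    by rewrite integral_cst //= probability_setT mule1.
  apply: ge0_le_integral => //.
  - move=> t _; have h : 0 <= (1/2 : R) by rewrite divr_ge0.
    by have := EF _ h; exact.
  - have h : measurable_fun setT (fun t => \sum_(Q <- D') gf hnp delta (Q *m X t)).
      by apply: measurable_sum => Q; exact: mg.
    move/measurable_realfun.measurable_EFinP: h => h.
    under eq_fun do rewrite sumEFin.
    exact: h.
  - move=> t _; rewrite sumEFin lee_fin /=.
    have [Q QD hQ] := Dcov _ (HS t).
    apply: (le_trans hQ); apply: (@le_sum_seq R _ D' (fun Q => gf hnp delta (Q *m X t))) => //.
    by move=> y; apply: gf_ge0.
move: step1 step2 Ig0; case: Ig => [r| |] // step1 step2 r0.
- rewrite sumEFin sum_const_seq in step2.
  have rN : 1/2 <= r *+ N := step2.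
  have r0' : 0 <= r := r0.
  apply: (lt_le_trans _ step1); rewrite -EFinM.
  suff h : 1 / (4 * M) * expR a < expR a * r by exact: h.
  have rM : 1/2 <= r * M.
    have -> : M = N%:R + 1 by rewrite /M natr1.
    rewrite -mulr_natr in rN; nra.
  have e0 := expR_gt0 a.
  have : 1 / (4 * M) < r.
    rewrite ltr_pdivrMr ?mulr_gt0 //; nra.
  by move=> h; rewrite mulrC ltr_pM2l.
- rewrite muleC gt0_mulye in step1; last by rewrite lte_fin expR_gt0.
  move: step1; rewrite leye_eq => /eqP ->; exact: ltry.
Qed.
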